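(* Let $M^*$ be any maximum-weight perfect matching of $G$, and for $b\in B$ let $M^*(b)$ be the item matched to $b$. Then for any agents $i,j$ and any $c\in[m-1]$, $v_{i,M^*(b_{(i,c)})}\ge v_{i,M^*(b_{(j,c+1)})}$ (dummy items having value $0$ for every agent).
   Context: Setting: $n$ agents, $m$ real items $\mathcal M$, restricted additive valuations: there are values $v(g)>0$ with $v_{i,g}\in\{0,v(g)\}$ and $v_i(S)=\sum_{g\in S}v_{i,g}$; every real item is valued positively by at least one agent. Let $u_1>u_2>\dots>u_t$ be the distinct values in $\{v(g):g\in\mathcal M\}$ and $\mathcal M_f=\{g:v(g)=u_f\}$. Add a set $\mathcal M_d$ of $mn-m$ dummy items valued $0$ by all agents. The bipartite graph $G$ has left side $A=\{a_g: g\in\mathcal M\cup\mathcal M_d\}$ ($mn$ vertices) and right side $B=\{b_{(i,c)}: i\in[n], c\in[m]\}$; the set $\mathcal N_c=\{b_{(i,c)}:i\in[n]\}$ is called bucket $c$. Edges: for each real $g\in\mathcal M_f$, each agent $i$ with $v_{i,g}>0$ and each $c\in[m]$, an edge $(a_g,b_{(i,c)})$ of weight $-m^{t-f}\cdot c$; for each dummy $g$ and all $i,c$, an edge $(a_g,b_{(i,c)})$ of weight $0$; no other edges. *)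

(* Defs.v *)
From mathcomp Require Import all_boot all_order all_algebra.
Set Implicit Arguments. Unset Strict Implicit. Unset Printing Implicit Defensive.
Import Order.TTheory GRing.Theory Num.Theory.
Local Open Scope ring_scope.

(* Left side A: real items 'I_m (inl) and m*n - m dummy items (inr). *)
Definition item (n m : nat) : finType := ('I_m + 'I_(m * n - m))%type.
(* Right side B: vertices b_(i,c), i an agent, c a bucket.
   Buckets are 0-indexed: ordinal c stands for bucket c+1 of the paper. *)
Definition slot (n m : nat) : finType := ('I_n * 'I_m)%type.

Section Defs.
Variables (R : realFieldType) (n m : nat).
Variables (v : 'I_m -> R) (val : 'I_n -> 'I_m -> R).

Definition itemval (i : 'I_n) (a : item n m) : R :=
  match a with inl g => val i g | inr _ => 0 end.

(* t - f, where u_f = v g: number of distinct item values strictly below v g *)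
Definition rank_below (g : 'I_m) : nat :=
  size (undup [seq v h | h <- enum 'I_m & v h < v g]).

Definition is_edge (a : item n m) (b : slot n m) : bool :=
  match a with inl g => val b.1 g > 0 | inr _ => true end.

Definition edge_weight (a : item n m) (b : slot n m) : int :=
  match a with
  | inl g => - ((m ^ rank_below g * (b.2 + 1))%N)%:Z
  | inr _ => 0
  end.

(* A perfect matching of G, given as the map b |-> M(b) from B to A:
   a bijection using only edges of G. *)
Definition perfect_matching (M : slot n m -> item n m) : Prop :=
  bijective M /\ forall b, is_edge (M b) b.

Definition matching_weight (M : slot n m -> item n m) : int :=
  \sum_(b : slot n m) edge_weight (M b) b.

Definition max_weight_perfect_matching (M : slot n m -> item n m) : Prop :=
  perfect_matching M /\
  forall M', perfect_matching M' -> matching_weight M' <= matching_weight M.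
End Defs.

(* Main.v *)
Require Import Defs.
From mathcomp Require Import all_boot all_order all_algebra all_fingroup.
From mathcomp Require Import zify.
Import Order.TTheory GRing.Theory Num.Theory.
Local Open Scope ring_scope.
Set Implicit Arguments. Unset Strict Implicit.

Section Aux.
Variables (R : realFieldType) (n m : nat).
Variables (v : 'I_m -> R) (val : 'I_n -> 'I_m -> R).

Definition cost (a : item n m) (b : slot n m) : nat :=
  match a with inl g => (m ^ rank_below v g * (b.2 + 1))%N | inr _ => 0%N end.

Lemma edge_weightE a b : edge_weight v a b = - ((cost a b)%:R : int).
Proof. by case: a => [g|g] //=; rewrite ?oppr0 // natz. Qed.

Lemma weightE (M : slot n m -> item n m) :
  matching_weight v M = - ((\sum_b cost (M b) b)%N%:R : int).
Proof.
rewrite /matching_weight natr_sum -sumrN; apply: eq_bigr => b _.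
exact: edge_weightE.
Qed.

Lemma rank_lt g h : v h < v g -> (rank_below v h < rank_below v g)%N.
Proof.
rewrite /rank_below => hlt.
have: leq (size (v h :: undup [seq v x | x <- enum 'I_m & v x < v h]))
        (size (undup [seq v x | x <- enum 'I_m & v x < v g])).
  apply: uniq_leq_size.
    rewrite /= undup_uniq andbT mem_undup; apply/negP => /mapP [x].
    by rewrite mem_filter => /andP [hx _] E; rewrite E ltxx in hx.
  move=> y; rewrite inE mem_undup => /orP [/eqP ->|].
    rewrite mem_undup; apply/mapP; exists h => //.
    by rewrite mem_filter hlt mem_enum.
  move=> /mapP [x]; rewrite mem_filter => /andP [hx _] ->.
  rewrite mem_undup; apply/mapP; exists x => //.
  by rewrite mem_filter mem_enum (lt_trans hx hlt).
by [].
Qed.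

Lemma split_sum (F : slot n m -> nat) (S : seq (slot n m)) : uniq S ->
  (\sum_b F b = \sum_(b <- S) F b + \sum_(b | b \notin S) F b)%N.
Proof.
move=> uS; rewrite (bigID (fun b => b \in S)) /=; congr (_ + _)%N.
by rewrite big_uniq.
Qed.

Lemma improve (M : slot n m -> item n m) (sg : slot n m -> slot n m) :
  max_weight_perfect_matching v val M -> bijective sg ->
  (forall b, is_edge val (M (sg b)) b) ->
  (\sum_b cost (M b) b <= \sum_b cost (M (sg b)) b)%N.
Proof.
move=> [[bijM _] maxM] bsg hE.
have := maxM (M \o sg) (conj (bij_comp bijM bsg) hE).
by rewrite !weightE lerN2 ler_nat.
Qed.
Lemma cmp_sums (M : slot n m -> item n m) sg S : uniq S ->
  (forall b, b \notin S -> sg b = b) ->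
  (\sum_b cost (M b) b <= \sum_b cost (M (sg b)) b)%N ->
  (\sum_(b <- S) cost (M b) b <= \sum_(b <- S) cost (M (sg b)) b)%N.
Proof.
move=> uS hS; rewrite !(split_sum _ uS).
rewrite [X in (_ <= _ + X)%N](eq_bigr (fun b => cost (M b) b)) ?leq_add2r //.
by move=> b /hS ->.
Qed.
End Aux.

Definition isdummy (n m : nat) (a : item n m) : bool :=
  if a is inr _ then true else false.

Theorem mainTheorem9 (R : realFieldType) (n m : nat)
  (v : 'I_m -> R) (val : 'I_n -> 'I_m -> R)
  (v_pos : forall g, 0 < v g)
  (restricted : forall i g, val i g = 0 \/ val i g = v g)
  (valued : forall g, exists i, 0 < val i g)
  (M : slot n m -> item n m)
  (hM : max_weight_perfect_matching v val M) :
  forall (i j : 'I_n) (c c' : 'I_m), nat_of_ord c' = (c + 1)%N ->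
    itemval val i (M (j, c')) <= itemval val i (M (i, c)).
Proof.
move=> i j c c' hc'.
have [[bijM edgeM] maxM] := hM.
have Minj := bij_inj bijM.
rewrite leNgt; apply/negP => Hlt.
have hnn : 0 <= itemval val i (M (i, c)).
  case: (M (i, c)) => [x|x] //=.
  by case: (restricted i x) => ->; rewrite ?lexx ?ltW.
case Eg: (M (j, c')) Hlt => [g0|g0] /= Hlt; last first.
  by move: (le_lt_trans hnn Hlt); rewrite ltxx.
have vg : val i g0 = v g0.
  by case: (restricted i g0) => // E; move: (le_lt_trans hnn Hlt); rewrite E ltxx.
have gpos : val i g0 > 0 by rewrite vg.
have ab : (i, c) != (j, c').
  by apply/eqP => -[_ E]; move: hc'; rewrite -E; lia.
have m0 : (0 < m)%N by have := ltn_ord c; lia.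
have pg : (0 < m ^ rank_below v g0)%N by rewrite expn_gt0 m0.
set a := (i, c). set b := (j, c').
case Eh: (M a) Hlt hnn => [h0|h0] /= Hlt hnn.
  have hpos : val i h0 > 0 by have := edgeM a; rewrite Eh.
  have vh : val i h0 = v h0.
    by case: (restricted i h0) => // E; move: hpos; rewrite E ltxx.
  have rlt : (rank_below v h0 < rank_below v g0)%N.
    by apply: rank_lt; rewrite -vh -vg.
  have m2 : (1 < m)%N by have := ltn_ord c'; lia.
  have hY : (m * m ^ rank_below v h0 <= m ^ rank_below v g0)%N.
    by rewrite -expnS leq_pexp2l.
  have pX : (0 < m ^ rank_below v h0)%N by rewrite expn_gt0 m0.
  case: (eqVneq i j) => [eij|nij].
    have bsg : bijective (tperm a b) by apply: inv_bij; exact: tpermK.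
    have hE : forall x, is_edge val (M (tperm a b x)) x.
      move=> x; case: (tpermP a b x) => [->|->|xa xb].
      - by rewrite Eg.
      - by rewrite Eh /= -eij.
      - exact: edgeM.
    have uS : uniq [:: a; b] by rewrite /= inE ab.
    have H : forall x, x \notin [:: a; b] -> tperm a b x = x.
      by move=> x; rewrite !inE negb_or => /andP [h1 h2]; rewrite tpermD // eq_sym.
    have := cmp_sums uS H (improve hM bsg hE).
    rewrite !big_cons big_nil tpermL tpermR Eg Eh /= hc'.
    move: hY pX; generalize (m ^ rank_below v h0)%N (m ^ rank_below v g0)%N => X Y.
    rewrite big_nil; nia.
  have [d Ed] : exists d : 'I_m, isdummy (M (i, d)).
    case: (boolP [exists d, isdummy (M (i, d))]) => [/existsP //|].
    rewrite negb_exists => /forallP Hall.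
    pose f (d : 'I_m) := if M (i, d) is inl x then x else d.
    have finj : injective f.
      move=> d1 d2; rewrite /f; have := Hall d1; have := Hall d2.
      case E1: (M (i, d1)) => [x1|x1] //; case E2: (M (i, d2)) => [x2|x2] // _ _ E.
      rewrite E -E2 in E1; have := Minj _ _ E1; by case.
    have [finv fK Kf] := injF_bij finj.
    have := Hall (finv g0); have := Kf g0; rewrite /f.
    case E: (M (i, finv g0)) => [x|x] // Ex _.
    rewrite Ex in E.
    rewrite -Eg in E; have := Minj _ _ E; case=> E0; move: nij; rewrite E0 eqxx. done.
  case Ed' : (M (i, d)) Ed => [x|dd] // _.
  set e := (i, d).
  have ae : a != e by apply/eqP => E; move: Ed'; rewrite -/e -E Eh.
  have be : b != e by apply/eqP => E; move: Ed'; rewrite -/e -E Eg.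
  have td : forall u w (z : slot n m), z != u -> z != w -> tperm u w z = z.
    by move=> u w z h1 h2; rewrite tpermD // eq_sym.
  pose sg := tperm a e \o tperm a b.
  have bsg : bijective sg by apply: bij_comp; apply: inv_bij; exact: tpermK.
  have sa : sg a = b by rewrite /sg /= tpermL tpermD // eq_sym.
  have sb : sg b = e by rewrite /sg /= tpermR tpermL.
  have se : sg e = a by rewrite /sg /= (tpermD ae be) tpermR.
  have hE : forall x, is_edge val (M (sg x)) x.
    move=> x; case: (eqVneq x a) => [->|xa]; first by rewrite sa Eg.
    case: (eqVneq x b) => [->|xb]; first by rewrite sb Ed'.
    case: (eqVneq x e) => [->|xe]; first by rewrite se Eh.
    by rewrite /sg /= (td _ _ _ xa xb) (td _ _ _ xa xe); exact: edgeM.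
  have uS : uniq [:: a; b; e] by rewrite /= !inE negb_or ab ae be.
  have H : forall x, x \notin [:: a; b; e] -> sg x = x.
    move=> x; rewrite !inE !negb_or => /and3P [h1 h2 h3].
    by rewrite /sg /= (td _ _ _ h1 h2) (td _ _ _ h1 h3).
  have := cmp_sums uS H (improve hM bsg hE).
  rewrite !big_cons !big_nil sa sb se Eg Eh Ed' /= hc'.
  have := ltn_ord d.
  move: hY pX; generalize (m ^ rank_below v h0)%N (m ^ rank_below v g0)%N => X Y.
  nia.
(* h dummy: swap *)
have bsg : bijective (tperm a b) by apply: inv_bij; exact: tpermK.
have hE : forall x, is_edge val (M (tperm a b x)) x.
  move=> x; case: (tpermP a b x) => [->|->|xa xb].
  - by rewrite Eg.
  - by rewrite Eh.
  - exact: edgeM.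
have uS : uniq [:: a; b] by rewrite /= inE ab.
have H : forall x, x \notin [:: a; b] -> tperm a b x = x.
  by move=> x; rewrite !inE negb_or => /andP [h1 h2]; rewrite tpermD // eq_sym.
have := cmp_sums uS H (improve hM bsg hE).
rewrite !big_cons big_nil tpermL tpermR Eg Eh /=.
rewrite big_nil hc'; nia.
Qed.
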